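(* Let $K\ge 2$ and let $\{\ell_t^a\}_{t\ge1,\,a\in[K]}$ be an oblivious adversarial loss sequence with $\ell_t^a\in[0,1]$ and effective loss range $\varepsilon$. Then for every $T\ge 1$ the expected regret of SODA satisfies \[ \mathcal{R}_T \le 4\varepsilon\sqrt{(K-1)\ln K}\,\sqrt{T+(K-1)\sqrt{T}\left(2+\sqrt{\ln\!\big(\sqrt{T}(K-1)\big)/2}\right)} + 4(K-1)\ln K . \]
   Context: Setting (prediction with limited advice, one extra observation): there are $K$ arms, $[K]=\{1,\dots,K\}$, and losses $\ell_t^a\in[0,1]$ for rounds $t=1,2,\dots$. In each round $t$ the learner picks a primary arm $A_t\in[K]$, suffers and observes $\ell_t^{A_t}$, and additionally picks a secondary arm $B_t$ (chosen after $A_t$) and observes, but does not suffer, $\ell_t^{B_t}$. An oblivious adversary fixes all losses (deterministically) before the game starts. The effective loss range is the smallest $\varepsilon$ such that $|\ell_t^a-\ell_t^{a'}|\le\varepsilon$ for all $t$ and all $a,a'\in[K]$ (almost surely); $\varepsilon\le 1$. The expected regret is $\mathcal{R}_T=\mathbb{E}[\sum_{t=1}^T\ell_t^{A_t}]-\min_{a\in[K]}\mathbb{E}[\sum_{t=1}^T\ell_t^a]$, expectations over all randomness. SODA (Second Order Difference Adjustments): for each round $t$, draw $A_t\sim \mathbf p_t$, then draw $B_t$ uniformly from $[K]\setminus\{A_t\}$, observe $\ell_t^{A_t},\ell_t^{B_t}$, and set the loss difference estimators $\widetilde{\Delta\ell}_t^a=(K-1)\mathbb 1(B_t=a)(\ell_t^{B_t}-\ell_t^{A_t})$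 for all $a\in[K]$. Let $D_t(a)=\sum_{s=1}^t\widetilde{\Delta\ell}_s^a$, $S_t(a)=\sum_{s=1}^t(\widetilde{\Delta\ell}_s^a)^2$, with $D_0=S_0=0$. The learning rate is $\eta_t=\min\{\sqrt{\ln K/(\max_a S_{t-1}(a)+(K-1)^2)},\,1/(2(K-1))\}$ and \[p_t^a=\frac{\exp(-\eta_tD_{t-1}(a)-\eta_t^2S_{t-1}(a))}{\sum_{b=1}^K\exp(-\eta_tD_{t-1}(b)-\eta_t^2S_{t-1}(b))}\] (so $\mathbf p_1$ is uniform). *)

(* Defs.v *)
From Stdlib Require Import Reals List Arith.
Import ListNotations.
Open Scope R_scope.

(* Arms are 0..K-1 (standing for [K] = {1..K}); rounds are t = 1, 2, ...
   A loss sequence is ell : nat -> nat -> R, ell t a = loss of arm a at round t. *)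

Definition rsum (l : list nat) (f : nat -> R) : R :=
  fold_right (fun x acc => f x + acc) 0 l.

Definition arms (K : nat) : list nat := seq 0 K.

Definition est (ell : nat -> nat -> R) (K s A B a : nat) : R :=
  if Nat.eqb B a then INR (K - 1) * (ell s B - ell s A) else 0.

(* history: list of (round s, primary arm A_s, secondary arm B_s) *)
Definition hist := list (nat * nat * nat).

Definition Dsum (ell : nat -> nat -> R) (K : nat) (h : hist) (a : nat) : R :=
  fold_right (fun x acc => match x with (s, A, B) => est ell K s A B a + acc end) 0 h.

Definition Ssum (ell : nat -> nat -> R) (K : nat) (h : hist) (a : nat) : R :=
  fold_right (fun x acc => match x with (s, A, B) => (est ell K s A B a) ^ 2 + acc end) 0 h.

(* learning rate eta_t, computed from the history of rounds 1..t-1 *)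
Definition eta (ell : nat -> nat -> R) (K : nat) (h : hist) : R :=
  Rmin (sqrt (ln (INR K) /
              (fold_right Rmax 0 (map (Ssum ell K h) (arms K)) + (INR (K - 1)) ^ 2)))
       (1 / (2 * INR (K - 1))).

Definition weight (ell : nat -> nat -> R) (K : nat) (h : hist) (a : nat) : R :=
  exp (- eta ell K h * Dsum ell K h a - (eta ell K h) ^ 2 * Ssum ell K h a).

Definition prob (ell : nat -> nat -> R) (K : nat) (h : hist) (a : nat) : R :=
  weight ell K h a / rsum (arms K) (weight ell K h).

(* Expected loss suffered over n rounds starting at round t with history h:
   A_t ~ p_t, B_t uniform on [K] \ {A_t}. *)
Fixpoint EL (ell : nat -> nat -> R) (K : nat) (n t : nat) (h : hist) : R :=
  match n with
  | O => 0
  | S n' =>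
      rsum (arms K) (fun A =>
        rsum (arms K) (fun B =>
          if Nat.eqb B A then 0
          else prob ell K h A * (1 / INR (K - 1)) *
               (ell t A + EL ell K n' (S t) ((t, A, B) :: h))))
  end.

Definition SODA_expected_loss (ell : nat -> nat -> R) (K T : nat) : R :=
  EL ell K T 1 nil.

Definition cum_loss (ell : nat -> nat -> R) (a T : nat) : R :=
  rsum (seq 1 T) (fun t => ell t a).

Definition SODA_regret (ell : nat -> nat -> R) (K T : nat) : R :=
  SODA_expected_loss ell K T
  - fold_right Rmin (cum_loss ell 0 T) (map (fun a => cum_loss ell a T) (arms K)).

(* Main.v *)
Require Import Defs.
From Stdlib Require Import Reals List Arith Lra Lia Psatz.
From Coquelicot Require Coquelicot.
Import ListNotations.
Open Scope R_scope.

Module ProdIneq.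
Import Coquelicot.Coquelicot.


Lemma prod_ineq (y : R) : -1/2 <= y <= 1/2 -> exp (- y - y^2) <= 1 - y.
Proof.
  intros Hy.
  set (g := fun x => (1 - x) * exp (x + x*x)).
  set (dg := fun x => exp (x + x*x) * (x * (1 - 2*x))).
  assert (Hd : forall x, is_derive g x (dg x)).
  { intros x. unfold g, dg. auto_derive; [auto|]. ring. }
  destruct (MVT_gen g 0 y dg) as [c [Hc Heq]].
  - intros x _. apply Hd.
  - intros x _. apply derivable_continuous_pt. apply ex_derive_Reals_0. exists (dg x). apply Hd.
  - assert (Hg0 : g 0 = 1) by (unfold g; rewrite Rplus_0_l, Rmult_0_l, exp_0; ring).
    assert (Hge : 1 <= g y).
    { assert (0 <= dg c * (y - 0)).
      { unfold dg. destruct (Rle_dec 0 y).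
        - rewrite Rmin_left in Hc by lra. rewrite Rmax_right in Hc by lra.
          apply Rmult_le_pos; [|lra]. apply Rmult_le_pos; [left; apply exp_pos|]. nra.
        - rewrite Rmin_right in Hc by lra. rewrite Rmax_left in Hc by lra.
          replace (exp (c + c*c) * (c * (1 - 2*c)) * (y - 0)) with
            (exp (c + c*c) * ((-c) * (1 - 2*c) * (-y))) by ring.
          apply Rmult_le_pos; [left; apply exp_pos|]. apply Rmult_le_pos; nra. }
      lra. }
    unfold g in Hge.
    replace (- y - y^2) with (- (y + y*y)) by ring.
    rewrite exp_Ropp.
    assert (Hp := exp_pos (y + y*y)).
    apply (Rmult_le_reg_r (exp (y + y*y))); auto.
    rewrite Rinv_l by lra. lra.
Qed.

End ProdIneq.
Import ProdIneq.



Lemma rsum_cons (l : list nat) f x : rsum (x :: l) f = f x + rsum l f.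
Proof. reflexivity. Qed.

Lemma rsum_ext l f g : (forall x, In x l -> f x = g x) -> rsum l f = rsum l g.
Proof.
  induction l as [|x l IH]; intros H; simpl; auto.
  rewrite (H x (or_introl eq_refl)), IH; auto. intros y Hy; apply H; right; auto.
Qed.

Lemma rsum_le l f g : (forall x, In x l -> f x <= g x) -> rsum l f <= rsum l g.
Proof.
  induction l as [|x l IH]; intros H; simpl; [lra|].
  apply Rplus_le_compat; [apply H; left; auto| apply IH; intros y Hy; apply H; right; auto].
Qed.

Lemma rsum_plus l f g : rsum l (fun x => f x + g x) = rsum l f + rsum l g.
Proof. induction l; simpl; [ring|rewrite IHl; ring]. Qed.

Lemma rsum_minus l f g : rsum l (fun x => f x - g x) = rsum l f - rsum l g.
Proof. induction l; simpl; [ring|rewrite IHl; ring]. Qed.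

Lemma rsum_scal l c f : rsum l (fun x => c * f x) = c * rsum l f.
Proof. induction l; simpl; [ring|rewrite IHl; ring]. Qed.

Lemma rsum_scal_r l c f : rsum l (fun x => f x * c) = rsum l f * c.
Proof. induction l; simpl; [ring|rewrite IHl; ring]. Qed.

Lemma rsum_const l c : rsum l (fun _ => c) = INR (length l) * c.
Proof. induction l; simpl length; [simpl; ring|rewrite rsum_cons, IHl, S_INR; ring]. Qed.

Lemma rsum_zero l : rsum l (fun _ => 0) = 0.
Proof. rewrite rsum_const; ring. Qed.

Lemma rsum_swap l1 l2 (f : nat -> nat -> R) :
  rsum l1 (fun x => rsum l2 (fun y => f x y)) = rsum l2 (fun y => rsum l1 (fun x => f x y)).
Proof.
  induction l1 as [|x l1 IH]; simpl.
  - symmetry; apply rsum_zero.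
  - rewrite IH, <- rsum_plus. reflexivity.
Qed.

Lemma rsum_nonneg l f : (forall x, In x l -> 0 <= f x) -> 0 <= rsum l f.
Proof. intros H. rewrite <- (rsum_zero l). apply rsum_le. auto. Qed.

Lemma rsum_pos l f : (forall x, In x l -> 0 < f x) -> l <> [] -> 0 < rsum l f.
Proof.
  destruct l as [|x l]; intros H Hl; [congruence|]. rewrite rsum_cons.
  assert (0 < f x) by (apply H; left; auto).
  assert (0 <= rsum l f) by (apply rsum_nonneg; intros; left; apply H; right; auto). lra.
Qed.

Lemma rsum_ge_term l f a : (forall x, In x l -> 0 <= f x) -> In a l -> f a <= rsum l f.
Proof.
  induction l as [|x l IH]; intros H Ha; [destruct Ha|]. rewrite rsum_cons.
  destruct Ha as [<-|Ha].
  - assert (0 <= rsum l f) by (apply rsum_nonneg; intros; apply H; right; auto). lra.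
  - assert (0 <= f x) by (apply H; left; auto).
    assert (f a <= rsum l f) by (apply IH; auto; intros; apply H; right; auto). lra.
Qed.

Lemma rsum_indic_notin l f a : ~ In a l -> rsum l (fun x => if Nat.eqb x a then f x else 0) = 0.
Proof.
  induction l as [|x l IH]; intros H; simpl; auto.
  destruct (Nat.eqb_spec x a) as [->|]; [exfalso; apply H; left; auto|].
  rewrite IH; [ring|intro Hc; apply H; right; auto].
Qed.

Lemma rsum_indic l f a : NoDup l -> In a l -> rsum l (fun x => if Nat.eqb x a then f x else 0) = f a.
Proof.
  induction l as [|x l IH]; intros Hn Ha; [destruct Ha|]. inversion Hn; subst. rewrite rsum_cons.
  destruct (Nat.eqb_spec x a) as [->|Hne].
  - rewrite rsum_indic_notin; auto; ring.
  - destruct Ha as [->|Ha]; [congruence|]. rewrite IH; auto; ring.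
Qed.

Lemma rsum_indic_c l f a : NoDup l -> In a l -> rsum l (fun x => if Nat.eqb x a then 0 else f x) = rsum l f - f a.
Proof.
  intros Hn Ha. rewrite <- (rsum_indic l f a Hn Ha), <- rsum_minus.
  apply rsum_ext. intros x _. destruct (Nat.eqb x a); ring.
Qed.

Lemma arms_nodup K : NoDup (arms K).
Proof. apply seq_NoDup. Qed.

Lemma in_arms K a : In a (arms K) <-> (a < K)%nat.
Proof. unfold arms. rewrite in_seq. lia. Qed.

Lemma arms_length K : length (arms K) = K.
Proof. unfold arms. apply length_seq. Qed.

Lemma rsum_arms_const K c : rsum (arms K) (fun _ => c) = INR K * c.
Proof. rewrite rsum_const, arms_length; auto. Qed.



Definition node (ell : nat -> nat -> R) (K : nat) (h : hist) (X : nat -> nat -> R) : R :=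
  rsum (arms K) (fun A => rsum (arms K) (fun B =>
     if Nat.eqb B A then 0 else prob ell K h A * (1 / INR (K - 1)) * X A B)).

Fixpoint Ex (ell : nat -> nat -> R) (K : nat) (n t : nat) (h : hist) (f : hist -> R) : R :=
  match n with
  | O => f h
  | S n' => node ell K h (fun A B => Ex ell K n' (S t) ((t, A, B) :: h) f)
  end.

Lemma weight_pos ell K h a : 0 < weight ell K h a.
Proof. apply exp_pos. Qed.

Lemma sumw_pos ell K h : (1 <= K)%nat -> 0 < rsum (arms K) (weight ell K h).
Proof.
  intros HK. apply rsum_pos. intros; apply weight_pos.
  unfold arms. destruct K; [lia|simpl; congruence].
Qed.

Lemma prob_nonneg ell K h a : (1 <= K)%nat -> 0 <= prob ell K h a.
Proof.
  intros HK. unfold prob. apply Rmult_le_pos; [left; apply weight_pos|].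
  left; apply Rinv_0_lt_compat, sumw_pos; auto.
Qed.

Lemma prob_sum ell K h : (1 <= K)%nat -> rsum (arms K) (prob ell K h) = 1.
Proof.
  intros HK. unfold prob, Rdiv. rewrite rsum_scal_r.
  apply Rinv_r. apply Rgt_not_eq, sumw_pos; auto.
Qed.

Lemma INR_Km1 K : (2 <= K)%nat -> INR (K - 1) = INR K - 1.
Proof. intros; rewrite minus_INR by lia; simpl; ring. Qed.

Lemma INR_Km1_pos K : (2 <= K)%nat -> 0 < INR (K - 1).
Proof. intros; apply lt_0_INR; lia. Qed.

Lemma node_ext ell K h X Y : (forall A B, (A < K)%nat -> (B < K)%nat -> X A B = Y A B) ->
  node ell K h X = node ell K h Y.
Proof.
  intros H. unfold node. apply rsum_ext; intros A HA; apply rsum_ext; intros B HB.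
  apply in_arms in HA; apply in_arms in HB. rewrite H; auto.
Qed.

Lemma node_plus ell K h X Y :
  node ell K h (fun A B => X A B + Y A B) = node ell K h X + node ell K h Y.
Proof.
  unfold node. rewrite <- rsum_plus. apply rsum_ext; intros A _.
  rewrite <- rsum_plus. apply rsum_ext; intros B _. destruct (Nat.eqb B A); ring.
Qed.

Lemma node_scal ell K h c X :
  node ell K h (fun A B => c * X A B) = c * node ell K h X.
Proof.
  unfold node. rewrite <- rsum_scal. apply rsum_ext; intros A _.
  rewrite <- rsum_scal. apply rsum_ext; intros B _. destruct (Nat.eqb B A); ring.
Qed.

Lemma node_inner ell K h A (Z : nat -> R) : (A < K)%nat ->
  rsum (arms K) (fun B => if Nat.eqb B A then 0 else prob ell K h A * (1 / INR (K - 1)) * Z B)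
  = prob ell K h A * (1 / INR (K - 1)) * (rsum (arms K) Z - Z A).
Proof.
  intros HA. rewrite <- rsum_indic_c; [|apply arms_nodup|apply in_arms; auto].
  rewrite <- rsum_scal. apply rsum_ext; intros B _. destruct (Nat.eqb B A); ring.
Qed.

Lemma node_const ell K h v : (2 <= K)%nat -> node ell K h (fun _ _ => v) = v.
Proof.
  intros HK. unfold node.
  rewrite (rsum_ext _ _ (fun A => prob ell K h A * v)).
  - rewrite rsum_scal_r, prob_sum by lia. ring.
  - intros A HA. apply in_arms in HA. rewrite node_inner by auto.
    rewrite rsum_arms_const. rewrite (INR_Km1 K HK).
    assert (H := INR_Km1_pos K HK). rewrite (INR_Km1 K HK) in H. field. lra.
Qed.

Lemma node_mono ell K h X Y : (2 <= K)%nat ->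
  (forall A B, (A < K)%nat -> (B < K)%nat -> A <> B -> X A B <= Y A B) ->
  node ell K h X <= node ell K h Y.
Proof.
  intros HK H. unfold node. apply rsum_le; intros A HA; apply rsum_le; intros B HB.
  apply in_arms in HA; apply in_arms in HB.
  destruct (Nat.eqb_spec B A); [lra|].
  apply Rmult_le_compat_l; [|apply H; auto].
  apply Rmult_le_pos; [apply prob_nonneg; lia|].
  left; apply Rdiv_lt_0_compat; [lra|apply INR_Km1_pos; auto].
Qed.

Definition valid (K : nat) (h : hist) : Prop :=
  Forall (fun x => match x with (s, A, B) => (1 <= s)%nat /\ (A < K)%nat /\ (B < K)%nat end) h.

Lemma Ex_plus ell K n t h f g :
  Ex ell K n t h (fun hf => f hf + g hf) = Ex ell K n t h f + Ex ell K n t h g.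
Proof.
  revert t h; induction n; intros t h; simpl; auto.
  rewrite <- node_plus. apply node_ext; intros; apply IHn.
Qed.

Lemma Ex_scal ell K n t h c f :
  Ex ell K n t h (fun hf => c * f hf) = c * Ex ell K n t h f.
Proof.
  revert t h; induction n; intros t h; simpl; auto.
  rewrite <- node_scal. apply node_ext; intros; apply IHn.
Qed.

Lemma Ex_const ell K n t h c : (2 <= K)%nat -> Ex ell K n t h (fun _ => c) = c.
Proof.
  intros HK; revert t h; induction n; intros t h; simpl; auto.
  rewrite (node_ext _ _ _ _ (fun _ _ => c)); [apply node_const; auto|intros; apply IHn].
Qed.

Lemma Ex_mono ell K n t h f g : (2 <= K)%nat ->
  (forall hf, valid K hf -> f hf <= g hf) -> valid K h -> (1 <= t)%nat ->
  Ex ell K n t h f <= Ex ell K n t h g.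
Proof.
  intros HK Hfg; revert t h; induction n; intros t h Hv Ht; simpl; auto.
  apply node_mono; auto. intros A B HA HB _. apply IHn; [|lia].
  constructor; auto.
Qed.

Fixpoint Fadd (g : nat -> hist -> nat -> nat -> R) (h : hist) : R :=
  match h with
  | [] => 0
  | (s, A, B) :: h' => g s h' A B + Fadd g h'
  end.

Lemma Ex_Fadd ell K n t h g (c : nat -> R) : (2 <= K)%nat ->
  (forall t h, node ell K h (g t h) = c t) ->
  Ex ell K n t h (Fadd g) = Fadd g h + rsum (seq t n) c.
Proof.
  intros HK Hc; revert t h; induction n; intros t h; simpl.
  - ring.
  - rewrite (node_ext _ _ _ _ (fun A B => g t h A B + (Fadd g h + rsum (seq (S t) n) c))).
    + rewrite node_plus, node_const, Hc by auto. ring.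
    + intros A B _ _. rewrite IHn. simpl. ring.
Qed.

Lemma EL_Ex ell K n t h : (2 <= K)%nat ->
  EL ell K n t h + Fadd (fun s _ A _ => ell s A) h = Ex ell K n t h (Fadd (fun s _ A _ => ell s A)).
Proof.
  intros HK; revert t h; induction n; intros t h; simpl; [ring|].
  rewrite (node_ext _ _ _ _ (fun A B => (ell t A + EL ell K n (S t) ((t,A,B)::h)) + Fadd (fun s _ A _ => ell s A) h)).
  - rewrite node_plus, node_const by auto. reflexivity.
  - intros A B _ _. rewrite <- IHn. simpl. ring.
Qed.



Lemma Ex_ext ell K n t h f g : (forall hf, f hf = g hf) -> Ex ell K n t h f = Ex ell K n t h g.
Proof.
  intros H; revert t h; induction n; intros t h; simpl; auto.
  apply node_ext; intros; apply IHn.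
Qed.

Lemma node_rsum ell K h (l : list nat) (F : nat -> nat -> nat -> R) : (2 <= K)%nat ->
  node ell K h (fun A B => rsum l (fun a => F a A B)) = rsum l (fun a => node ell K h (F a)).
Proof.
  intros HK. induction l as [|x l IH]; simpl.
  - apply node_const; auto.
  - rewrite node_plus, IH. reflexivity.
Qed.

Lemma Ex_rsum ell K n t h (l : list nat) (F : nat -> hist -> R) : (2 <= K)%nat ->
  Ex ell K n t h (fun hf => rsum l (fun a => F a hf)) = rsum l (fun a => Ex ell K n t h (F a)).
Proof.
  intros HK. induction l as [|x l IH]; simpl.
  - apply Ex_const; auto.
  - rewrite Ex_plus, IH. reflexivity.
Qed.

Definition mloss ell K h t := rsum (arms K) (fun A => prob ell K h A * ell t A).

Lemma node_lossA ell K h t : (2 <= K)%nat -> node ell K h (fun A B => ell t A) = mloss ell K h t.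
Proof.
  intros HK. unfold node, mloss. apply rsum_ext; intros A HA. apply in_arms in HA.
  rewrite node_inner by auto. rewrite rsum_arms_const.
  assert (H := INR_Km1_pos K HK). rewrite (INR_Km1 K HK) in *. field. lra.
Qed.

Lemma node_est ell K h t a : (2 <= K)%nat -> (a < K)%nat ->
  node ell K h (fun A B => est ell K t A B a) = ell t a - mloss ell K h t.
Proof.
  intros HK Ha. unfold node, mloss.
  rewrite (rsum_ext _ _ (fun A => prob ell K h A * ell t a - prob ell K h A * ell t A)).
  - rewrite rsum_minus, rsum_scal_r, prob_sum by lia. ring.
  - intros A HA. apply in_arms in HA. rewrite node_inner by auto.
    unfold est at 2.
    replace (if Nat.eqb A a then INR (K - 1) * (ell t A - ell t A) else 0) with 0
      by (destruct (Nat.eqb A a); ring).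
    unfold est.
    rewrite (rsum_indic (arms K) (fun B => INR (K - 1) * (ell t B - ell t A)) a);
      [|apply arms_nodup|apply in_arms; auto].
    assert (H := INR_Km1_pos K HK). field. lra.
Qed.

Definition gP ell K : nat -> hist -> nat -> nat -> R :=
  fun s h0 A B => rsum (arms K) (fun a => prob ell K h0 a * est ell K s A B a).

Lemma node_gP ell K h t : (2 <= K)%nat -> node ell K h (gP ell K t h) = 0.
Proof.
  intros HK. unfold gP. rewrite node_rsum by auto.
  rewrite (rsum_ext _ _ (fun a => prob ell K h a * ell t a - prob ell K h a * mloss ell K h t)).
  - rewrite rsum_minus, rsum_scal_r, prob_sum by lia. unfold mloss. ring.
  - intros a Ha. apply in_arms in Ha. rewrite node_scal, node_est by auto. ring.
Qed.

Lemma Dsum_Fadd ell K h a : Dsum ell K h a = Fadd (fun s _ A B => est ell K s A B a) h.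
Proof. induction h as [|[[s A] B] h IH]; simpl; auto. rewrite <- IH. reflexivity. Qed.

Lemma regret_decomp ell K T astar : (2 <= K)%nat -> (astar < K)%nat ->
  SODA_expected_loss ell K T - cum_loss ell astar T =
  Ex ell K T 1 [] (fun hf => Fadd (gP ell K) hf - Dsum ell K hf astar).
Proof.
  intros HK Ha. unfold SODA_expected_loss.
  assert (E1 := EL_Ex ell K T 1 [] HK). simpl Fadd in E1. rewrite Rplus_0_r in E1. rewrite E1.
  set (gM := fun s h A B => ell s A - gP ell K s h A B + est ell K s A B astar).
  rewrite (Ex_ext _ _ _ _ _ _ (fun hf => Fadd gM hf + (Fadd (gP ell K) hf - Dsum ell K hf astar))).
  - rewrite Ex_plus. rewrite (Ex_Fadd ell K T 1 [] gM (fun t => ell t astar)); auto.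
    + unfold cum_loss. simpl. ring.
    + intros t h. unfold gM. rewrite node_plus.
      unfold Rminus. rewrite node_plus.
      rewrite (node_ext _ _ _ (fun A B => - gP ell K t h A B) (fun A B => (-1) * gP ell K t h A B)) by (intros; ring).
      rewrite node_scal, node_gP, node_lossA, node_est by auto. ring.
  - intros hf. rewrite Dsum_Fadd. unfold gM. clear.
    induction hf as [|[[s A] B] hf IH]; simpl; [ring|]. rewrite IH. ring.
Qed.

Lemma Fadd_const_Ex ell K T c : (2 <= K)%nat ->
  Ex ell K T 1 [] (Fadd (fun _ _ _ _ => c)) = INR T * c.
Proof.
  intros HK. rewrite (Ex_Fadd ell K T 1 [] _ (fun _ => c)); auto.
  - simpl. rewrite rsum_const, length_seq. ring.
  - intros; apply node_const; auto.
Qed.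

Lemma regret_trivial ell K T astar : (2 <= K)%nat -> (astar < K)%nat ->
  SODA_expected_loss ell K T - cum_loss ell astar T =
  Ex ell K T 1 [] (Fadd (fun s _ A _ => ell s A - ell s astar)).
Proof.
  intros HK Ha. unfold SODA_expected_loss.
  assert (E1 := EL_Ex ell K T 1 [] HK). simpl Fadd in E1. rewrite Rplus_0_r in E1. rewrite E1.
  rewrite (Ex_ext _ _ _ _ _ (Fadd (fun s _ A _ => ell s A))
                 (fun hf => Fadd (fun s _ A _ => ell s A - ell s astar) hf + Fadd (fun s _ _ _ => ell s astar) hf)).
  2:{ intros hf; induction hf as [|[[s A] B] hf IH]; simpl; [ring|]. rewrite IH. ring. }
  rewrite Ex_plus. rewrite (Ex_Fadd ell K T 1 [] (fun s _ _ _ => ell s astar) (fun t => ell t astar)); auto.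
  - unfold cum_loss. simpl. ring.
  - intros; apply node_const; auto.
Qed.



Definition Qm ell K h := fold_right Rmax 0 (map (Ssum ell K h) (arms K)).
Definition Wf ell K h et := rsum (arms K) (fun a => exp (- et * Dsum ell K h a - et ^ 2 * Ssum ell K h a)).

Lemma fmax_ge (f : nat -> R) l a : In a l -> f a <= fold_right Rmax 0 (map f l).
Proof.
  induction l as [|x l IH]; intros H; [destruct H|]. simpl.
  destruct H as [->|H]; [apply Rmax_l|]. eapply Rle_trans; [apply IH; auto|apply Rmax_r].
Qed.

Lemma fmax_nonneg (f : nat -> R) l : 0 <= fold_right Rmax 0 (map f l).
Proof. induction l; simpl; [lra|]. eapply Rle_trans; [apply IHl|apply Rmax_r]. Qed.

Lemma fmax_le (f : nat -> R) l b : 0 <= b -> (forall a, In a l -> f a <= b) -> fold_right Rmax 0 (map f l) <= b.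
Proof.
  induction l as [|x l IH]; intros Hb H; simpl; auto.
  apply Rmax_lub; [apply H; left; auto|apply IH; auto; intros; apply H; right; auto].
Qed.

Lemma ln_le_lin x : 0 < x -> ln x <= x - 1.
Proof.
  intros Hx. assert (H := exp_ineq1_le (x - 1)).
  rewrite <- (exp_ln x) in H at 1 by auto.
  destruct (Rle_dec (ln x) (x - 1)); auto.
  exfalso. assert (exp (x - 1) < exp (ln x)) by (apply exp_increasing; lra). lra.
Qed.

Lemma ln_mono x y : 0 < x -> x <= y -> ln x <= ln y.
Proof.
  intros Hx Hxy. destruct (Req_dec x y) as [->|]; [lra|]. left; apply ln_increasing; lra.
Qed.

Lemma lnK_pos K : (2 <= K)%nat -> 0 < ln (INR K).
Proof.
  intros HK. rewrite <- ln_1. apply ln_increasing; [lra|].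
  apply (lt_INR 1 K); lia.
Qed.

Lemma lnK_ge_half K : (2 <= K)%nat -> / 2 < ln (INR K).
Proof.
  intros HK. eapply Rlt_le_trans; [apply ln_lt_2|]. apply ln_mono; [lra|].
  apply (le_INR 2 K) in HK. simpl in HK. lra.
Qed.

Definition Lbnd (ell : nat -> nat -> R) (K : nat) :=
  forall t a, (1 <= t)%nat -> (a < K)%nat -> 0 <= ell t a <= 1.

Definition ventry (K : nat) (x : nat * nat * nat) : Prop :=
  match x with (s, A, B) => (1 <= s)%nat /\ (A < K)%nat /\ (B < K)%nat end.

Lemma est_abs ell K s A B a : (2 <= K)%nat -> Lbnd ell K -> ventry K (s, A, B) ->
  Rabs (est ell K s A B a) <= INR (K - 1).
Proof.
  intros HK Hl [Hs [HA HB]]. assert (Hk := INR_Km1_pos K HK). unfold est.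
  destruct (Nat.eqb B a); [|rewrite Rabs_R0; lra].
  rewrite Rabs_mult, Rabs_pos_eq by lra.
  assert (H1 := Hl s A Hs HA). assert (H2 := Hl s B Hs HB).
  rewrite <- (Rmult_1_r (INR (K-1))) at 2. apply Rmult_le_compat_l; [lra|].
  apply Rabs_le; lra.
Qed.

Lemma est_sq ell K s A B a : (2 <= K)%nat -> Lbnd ell K -> ventry K (s, A, B) ->
  est ell K s A B a ^ 2 <= INR (K - 1) ^ 2.
Proof.
  intros HK Hl Hv. assert (H := est_abs ell K s A B a HK Hl Hv).
  assert (Hk := INR_Km1_pos K HK).
  unfold Rabs in H; destruct (Rcase_abs (est ell K s A B a)); nra.
Qed.

Lemma Ssum_nonneg ell K h a : 0 <= Ssum ell K h a.
Proof.
  induction h as [|[[s A] B] h IH]; simpl; [lra|].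
  assert (0 <= est ell K s A B a ^ 2) by (apply pow2_ge_0). lra.
Qed.

Lemma Qm_nonneg ell K h : 0 <= Qm ell K h.
Proof. apply fmax_nonneg. Qed.

Lemma Qm_mono ell K x h : Qm ell K h <= Qm ell K (x :: h).
Proof.
  destruct x as [[s A] B]. unfold Qm. apply fmax_le; [apply fmax_nonneg|].
  intros a Ha. eapply Rle_trans; [|apply fmax_ge; eauto]. simpl.
  assert (0 <= est ell K s A B a ^ 2) by (apply pow2_ge_0). lra.
Qed.

Lemma Qm_step ell K x h : (2 <= K)%nat -> Lbnd ell K -> ventry K x ->
  Qm ell K (x :: h) <= Qm ell K h + INR (K - 1) ^ 2.
Proof.
  intros HK Hl Hv. destruct x as [[s A] B]. unfold Qm at 1. apply fmax_le.
  - assert (0 <= Qm ell K h) by apply Qm_nonneg. assert (0 <= INR (K-1) ^ 2) by apply pow2_ge_0. lra.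
  - intros a Ha. simpl. assert (H := est_sq ell K s A B a HK Hl Hv).
    assert (Ssum ell K h a <= Qm ell K h) by (apply fmax_ge; auto). lra.
Qed.

Lemma eta_eq ell K h : eta ell K h =
  Rmin (sqrt (ln (INR K) / (Qm ell K h + INR (K - 1) ^ 2))) (1 / (2 * INR (K - 1))).
Proof. reflexivity. Qed.

Lemma eta_pos ell K h : (2 <= K)%nat -> 0 < eta ell K h.
Proof.
  intros HK. rewrite eta_eq. assert (Hk := INR_Km1_pos K HK).
  assert (0 <= Qm ell K h) by apply Qm_nonneg.
  apply Rmin_glb_lt.
  - apply sqrt_lt_R0. apply Rdiv_lt_0_compat; [apply lnK_pos; auto|]. nra.
  - apply Rdiv_lt_0_compat; lra.
Qed.

Lemma eta_small ell K h : (2 <= K)%nat -> eta ell K h * INR (K - 1) <= / 2.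
Proof.
  intros HK. assert (Hk := INR_Km1_pos K HK). rewrite eta_eq.
  assert (H := Rmin_r (sqrt (ln (INR K) / (Qm ell K h + INR (K - 1) ^ 2))) (1 / (2 * INR (K - 1)))).
  apply (Rmult_le_compat_r (INR (K-1))) in H; [|lra].
  eapply Rle_trans; [apply H|]. right. field. lra.
Qed.

Lemma eta_le_sqrt ell K h : eta ell K h <= sqrt (ln (INR K) / (Qm ell K h + INR (K - 1) ^ 2)).
Proof. rewrite eta_eq. apply Rmin_l. Qed.

Lemma eta_mono ell K x h : (2 <= K)%nat -> eta ell K (x :: h) <= eta ell K h.
Proof.
  intros HK. rewrite !eta_eq. assert (Hk := INR_Km1_pos K HK).
  assert (Hq := Qm_mono ell K x h). assert (0 <= Qm ell K h) by apply Qm_nonneg.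
  assert (HL := lnK_pos K HK).
  apply Rle_min_compat_r. apply sqrt_le_1_alt.
  apply Rmult_le_compat_l; [lra|]. apply Rinv_le_contravar; nra.
Qed.



Lemma Wf_pos ell K h et : (2 <= K)%nat -> 0 < Wf ell K h et.
Proof.
  intros HK. apply rsum_pos; [intros; apply exp_pos|]. unfold arms. destruct K; [lia|simpl; congruence].
Qed.

Lemma Wf_weight ell K h : Wf ell K h (eta ell K h) = rsum (arms K) (weight ell K h).
Proof. reflexivity. Qed.

Lemma per_round ell K s A B h : (2 <= K)%nat -> Lbnd ell K -> ventry K (s, A, B) ->
  eta ell K h * gP ell K s h A B <=
  ln (Wf ell K h (eta ell K h)) - ln (Wf ell K ((s, A, B) :: h) (eta ell K h)).
Proof.
  intros HK Hl Hv.
  assert (Het := eta_pos ell K h HK). assert (Hsm := eta_small ell K h HK).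
  set (et := eta ell K h) in *.
  assert (Hk := INR_Km1_pos K HK).
  set (w := fun a => exp (- et * Dsum ell K h a - et ^ 2 * Ssum ell K h a)).
  set (W := Wf ell K h et).
  assert (HW : 0 < W) by (apply Wf_pos; auto).
  assert (Hsum : rsum (arms K) (fun a => w a * est ell K s A B a) = W * gP ell K s h A B).
  { unfold gP, prob. rewrite <- rsum_scal. apply rsum_ext. intros a _.
    unfold W, w, et. rewrite Wf_weight. unfold weight. field. apply Rgt_not_eq.
    pose proof (Wf_pos ell K h (eta ell K h) HK) as Hq; unfold Wf in Hq; exact Hq. }
  assert (Hle : Wf ell K ((s, A, B) :: h) et <= W * (1 - et * gP ell K s h A B)).
  { replace (W * (1 - et * gP ell K s h A B)) with
      (rsum (arms K) (fun a => w a * (1 - et * est ell K s A B a))).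
    2:{ rewrite (rsum_ext _ _ (fun a => w a - et * (w a * est ell K s A B a))) by (intros; ring).
        rewrite rsum_minus, rsum_scal, Hsum. unfold W, Wf. fold w. ring. }
    unfold Wf. apply rsum_le. intros a _. simpl Dsum. simpl Ssum.
    apply (Rle_trans _ (w a * exp (- (et * est ell K s A B a) - (et * est ell K s A B a) ^ 2))).
    { right. unfold w. rewrite <- exp_plus. f_equal. ring. }
    apply Rmult_le_compat_l; [left; apply exp_pos|].
    apply prod_ineq.
    assert (Ha := est_abs ell K s A B a HK Hl Hv).
    assert (Rabs (et * est ell K s A B a) <= / 2).
    { rewrite Rabs_mult, Rabs_pos_eq by lra. eapply Rle_trans; [|apply Hsm].
      apply Rmult_le_compat_l; lra. }
    unfold Rabs in H; destruct (Rcase_abs (et * est ell K s A B a)); lra. }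
  assert (HW' : 0 < Wf ell K ((s, A, B) :: h) et) by (apply Wf_pos; auto).
  assert (Hpos : 0 < 1 - et * gP ell K s h A B).
  { destruct (Rle_dec (1 - et * gP ell K s h A B) 0); [|lra]. nra. }
  assert (H1 := ln_mono _ _ HW' Hle). rewrite ln_mult in H1 by auto.
  assert (H2 := ln_le_lin _ Hpos). fold W. lra.
Qed.

Lemma exp_mono x y : x <= y -> exp x <= exp y.
Proof. intros [H|H]; [left; apply exp_increasing; auto|subst; lra]. Qed.

Lemma exp_conv r v : 0 <= r <= 1 -> exp (r * v) <= 1 + r * (exp v - 1).
Proof.
  intros Hr.
  assert (T : forall y c, exp c * (1 + (y - c)) <= exp y).
  { intros y c. replace y with (c + (y - c)) at 2 by ring. rewrite exp_plus.
    apply Rmult_le_compat_l; [left; apply exp_pos|apply exp_ineq1_le]. }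
  assert (H1 := T v (r * v)). assert (H2 := T 0 (r * v)). rewrite exp_0 in H2.
  assert (E : exp (r * v) = r * (exp (r * v) * (1 + (v - r * v))) + (1 - r) * (exp (r * v) * (1 + (0 - r * v)))) by ring.
  rewrite E.
  assert (r * (exp (r * v) * (1 + (v - r * v))) <= r * exp v) by (apply Rmult_le_compat_l; lra).
  assert ((1 - r) * (exp (r * v) * (1 + (0 - r * v))) <= (1 - r) * 1) by (apply Rmult_le_compat_l; lra).
  lra.
Qed.

Lemma compare ell K y e e' : (2 <= K)%nat -> 0 < e' -> e' <= e ->
  ln (Wf ell K y e') / e' <=
  ln (Wf ell K y e) / e + (1 / e' - 1 / e) * ln (INR K) + (e - e') * Qm ell K y.
Proof.
  intros HK He' Hee.
  assert (HKp : 0 < INR K) by (apply (lt_INR 0 K); lia).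
  set (r := e' / e).
  assert (Hr : 0 < r <= 1).
  { unfold r; split; [apply Rdiv_lt_0_compat; lra|]. unfold Rdiv; rewrite <- (Rinv_r e) by lra; apply Rmult_le_compat_r; [left; apply Rinv_0_lt_compat; lra| lra]. }
  set (u := fun a => - e * Dsum ell K y a - e * e' * Ssum ell K y a).
  set (U := rsum (arms K) (fun a => exp (u a))).
  assert (HU : 0 < U) by (apply rsum_pos; [intros; apply exp_pos|unfold arms; destruct K; [lia|simpl; congruence]]).
  set (cc := ln (U / INR K)).
  assert (HW1 : Wf ell K y e' <= INR K * exp (r * cc)).
  { unfold Wf.
    rewrite (rsum_ext _ _ (fun a => exp (r * cc) * exp (r * (u a - cc)))).
    2:{ intros a _. rewrite <- exp_plus. f_equal. unfold u, r. field. lra. }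
    rewrite rsum_scal. rewrite (Rmult_comm (INR K)). apply Rmult_le_compat_l; [left; apply exp_pos|].
    eapply Rle_trans.
    { apply rsum_le. intros a _. apply (exp_conv r (u a - cc)). lra. }
    rewrite (rsum_ext _ _ (fun a => (1 - r) + r * (INR K / U) * exp (u a))).
    2:{ intros a _. replace (u a - cc) with (u a + - cc) by ring. rewrite exp_plus. unfold cc. rewrite exp_Ropp, exp_ln.
        - field. split; lra.
        - apply Rdiv_lt_0_compat; lra. }
    rewrite rsum_plus, rsum_arms_const, rsum_scal. fold U. right. field. lra. }
  assert (HU2 : U <= Wf ell K y e * exp (e * (e - e') * Qm ell K y)).
  { unfold U, Wf. rewrite <- rsum_scal_r. apply rsum_le. intros a Ha.
    replace (u a) with ((- e * Dsum ell K y a - e ^ 2 * Ssum ell K y a) + e * (e - e') * Ssum ell K y a)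
      by (unfold u; ring).
    rewrite exp_plus. apply Rmult_le_compat_l; [left; apply exp_pos|].
    apply exp_mono. apply Rmult_le_compat_l; [nra|]. unfold Qm. apply fmax_ge; auto. }
  assert (HWp : 0 < Wf ell K y e') by (apply Wf_pos; auto).
  assert (HWe : 0 < Wf ell K y e) by (apply Wf_pos; auto).
  assert (L1 := ln_mono _ _ HWp HW1). rewrite ln_mult, ln_exp in L1 by (auto; apply exp_pos).
  assert (L2 := ln_mono _ _ HU HU2). rewrite ln_mult, ln_exp in L2 by (auto; apply exp_pos).
  unfold cc in L1. unfold Rdiv at 1 in L1. rewrite ln_mult, ln_Rinv in L1 by (auto; apply Rinv_0_lt_compat; auto).
  unfold r in L1.
  apply (Rmult_le_reg_r e'); auto.
  replace (ln (Wf ell K y e') / e' * e') with (ln (Wf ell K y e')) by (field; lra).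
  assert (Hq : e' / e * (ln U - ln (INR K)) <= e' / e * (ln (Wf ell K y e) + e * (e - e') * Qm ell K y - ln (INR K))).
  { apply Rmult_le_compat_l; [left; apply Rdiv_lt_0_compat; lra|lra]. }
  eapply Rle_trans; [apply L1|]. eapply Rle_trans; [apply Rplus_le_compat_l, Hq|].
  right. field. lra.
Qed.



Lemma incr_bound L Q Q' c et : 0 < L -> 0 <= Q -> Q <= Q' -> Q' <= Q + c -> 0 < c -> 0 < et ->
  et <= sqrt (L / (Q + c)) -> et * (Q' - Q) <= 2 * sqrt L * (sqrt Q' - sqrt Q).
Proof.
  intros HL HQ HQQ HQc Hc Het Hs.
  destruct (Req_dec Q Q') as [<-|Hne].
  - replace (Q - Q) with 0 by ring. replace (sqrt Q - sqrt Q) with 0 by ring. lra.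
  - assert (HQ' : 0 < Q') by lra.
    set (a := sqrt Q'). set (b := sqrt Q).
    assert (Ha : 0 < a) by (apply sqrt_lt_R0; auto).
    assert (Hb : 0 <= b) by apply sqrt_pos.
    assert (Hab : b <= a) by (apply sqrt_le_1_alt; lra).
    assert (Ea : a * a = Q') by (apply sqrt_sqrt; lra).
    assert (Eb : b * b = Q) by (apply sqrt_sqrt; lra).
    assert (Hs2 : et <= sqrt L / a).
    { eapply Rle_trans; [apply Hs|]. unfold a. rewrite <- sqrt_div_alt by auto.
      apply sqrt_le_1_alt. unfold Rdiv. apply Rmult_le_compat_l; [lra|].
      apply Rinv_le_contravar; lra. }
    assert (HsL : 0 < sqrt L) by (apply sqrt_lt_R0; auto).
    assert (H1 : et * (Q' - Q) <= sqrt L / a * (Q' - Q)) by (apply Rmult_le_compat_r; lra).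
    eapply Rle_trans; [apply H1|]. rewrite <- Ea, <- Eb.
    apply (Rmult_le_reg_r a); auto.
    replace (sqrt L / a * (a * a - b * b) * a) with (sqrt L * ((a - b) * (a + b))) by (field; lra).
    replace (2 * sqrt L * (a - b) * a) with (sqrt L * ((a - b) * (2 * a))) by ring.
    apply Rmult_le_compat_l; [lra|]. apply Rmult_le_compat_l; lra.
Qed.

Definition Jf ell K h := Fadd (gP ell K) h + ln (Wf ell K h (eta ell K h)) / eta ell K h
   - ln (INR K) / eta ell K h + eta ell K h * Qm ell K h.

Lemma Qm_nil ell K : Qm ell K [] = 0.
Proof.
  apply Rle_antisym; [|apply Qm_nonneg]. apply fmax_le; [lra|]. intros; simpl; lra.
Qed.

Lemma Wf_nil ell K et : Wf ell K [] et = INR K.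
Proof.
  unfold Wf. simpl. rewrite (rsum_ext _ _ (fun _ => 1)).
  - rewrite rsum_arms_const; ring.
  - intros; rewrite <- exp_0; f_equal; ring.
Qed.

Lemma J_bound ell K h : (2 <= K)%nat -> Lbnd ell K -> valid K h ->
  Jf ell K h <= 2 * sqrt (ln (INR K)) * sqrt (Qm ell K h).
Proof.
  intros HK Hl. induction h as [|[[s A] B] h IH]; intros Hv.
  - unfold Jf. rewrite Qm_nil, Wf_nil. simpl Fadd. rewrite sqrt_0.
    assert (H := eta_pos ell K [] HK). right. field. lra.
  - inversion Hv as [|x l Hx Hv' E]; subst.
    assert (Hve : ventry K (s, A, B)) by exact Hx.
    specialize (IH Hv').
    set (h' := (s, A, B) :: h).
    assert (He := eta_pos ell K h HK). assert (He' := eta_pos ell K h' HK).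
    assert (Hm := eta_mono ell K (s, A, B) h HK). fold h' in Hm.
    assert (Hpr := per_round ell K s A B h HK Hl Hve). fold h' in Hpr.
    assert (Hcmp := compare ell K h' (eta ell K h) (eta ell K h') HK He' Hm).
    assert (HQ1 := Qm_mono ell K (s, A, B) h). fold h' in HQ1.
    assert (HQ2 := Qm_step ell K (s, A, B) h HK Hl Hve). fold h' in HQ2.
    assert (Hk := INR_Km1_pos K HK).
    assert (Hinc : eta ell K h * (Qm ell K h' - Qm ell K h) <=
                   2 * sqrt (ln (INR K)) * (sqrt (Qm ell K h') - sqrt (Qm ell K h))).
    { apply (incr_bound _ _ _ (INR (K - 1) ^ 2)); auto.
      - apply lnK_pos; auto.
      - apply Qm_nonneg.
      - apply pow_lt; auto.
      - apply eta_le_sqrt. }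
    assert (Hg : gP ell K s h A B <= ln (Wf ell K h (eta ell K h)) / eta ell K h
                                     - ln (Wf ell K h' (eta ell K h)) / eta ell K h).
    { apply (Rmult_le_reg_l (eta ell K h)); auto.
      replace (eta ell K h * (ln (Wf ell K h (eta ell K h)) / eta ell K h
                                     - ln (Wf ell K h' (eta ell K h)) / eta ell K h))
        with (ln (Wf ell K h (eta ell K h)) - ln (Wf ell K h' (eta ell K h))) by (field; lra).
      exact Hpr. }
    unfold Jf in *. unfold h' at 1. simpl Fadd. fold h'.
    unfold Rdiv in *.
    nra.
Qed.



Lemma sqrt_add_le x y : 0 <= x -> 0 <= y -> sqrt (x + y) <= sqrt x + sqrt y.
Proof.
  intros Hx Hy. assert (Ha := sqrt_pos x). assert (Hb := sqrt_pos y).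
  apply Rsqr_incr_0_var; [|lra]. unfold Rsqr.
  rewrite sqrt_sqrt by lra.
  assert (sqrt x * sqrt x = x) by (apply sqrt_sqrt; auto).
  assert (sqrt y * sqrt y = y) by (apply sqrt_sqrt; auto). nra.
Qed.

Lemma path_bound ell K h a : (2 <= K)%nat -> Lbnd ell K -> valid K h -> (a < K)%nat ->
  Fadd (gP ell K) h - Dsum ell K h a <=
  3 * sqrt (ln (INR K)) * sqrt (Qm ell K h) + 4 * INR (K - 1) * ln (INR K).
Proof.
  intros HK Hl Hv Ha.
  assert (HJ := J_bound ell K h HK Hl Hv). unfold Jf in HJ.
  set (et := eta ell K h) in *.
  assert (He : 0 < et) by apply eta_pos, HK.
  set (Q := Qm ell K h) in *.
  set (L := ln (INR K)).
  assert (HL : / 2 < L) by apply lnK_ge_half, HK.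
  assert (Hk := INR_Km1_pos K HK).
  assert (HQ : 0 <= Q) by apply Qm_nonneg.
  assert (HW : exp (- et * Dsum ell K h a - et ^ 2 * Ssum ell K h a) <= Wf ell K h et).
  { unfold Wf. apply (rsum_ge_term _ (fun a => exp (- et * Dsum ell K h a - et ^ 2 * Ssum ell K h a))).
    - intros; left; apply exp_pos.
    - apply in_arms; auto. }
  apply ln_mono in HW; [|apply exp_pos]. rewrite ln_exp in HW.
  assert (HS : Ssum ell K h a <= Q) by (apply fmax_ge, in_arms; auto).
  assert (HlnW : - Dsum ell K h a - et * Q <= ln (Wf ell K h et) / et).
  { apply (Rmult_le_reg_l et); auto. replace (et * (ln (Wf ell K h et) / et)) with (ln (Wf ell K h et)) by (field; lra).
    nra. }
  assert (HLe : L / et <= sqrt L * sqrt Q + sqrt L * INR (K - 1) + 2 * INR (K - 1) * L).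
  { assert (HsL : 0 < sqrt L) by (apply sqrt_lt_R0; lra).
    assert (HsQ := sqrt_pos Q).
    unfold et. rewrite eta_eq. fold Q. fold L.
    unfold Rmin. destruct (Rle_dec _ _) as [Hle|Hle].
    - rewrite sqrt_div_alt by nra.
      assert (HV : 0 < sqrt (Q + INR (K - 1) ^ 2)) by (apply sqrt_lt_R0; nra).
      replace (L / (sqrt L / sqrt (Q + INR (K - 1) ^ 2))) with (sqrt L * sqrt (Q + INR (K - 1) ^ 2)).
      2:{ assert (sqrt L * sqrt L = L) by (apply sqrt_sqrt; lra).
          replace (L / (sqrt L / sqrt (Q + INR (K - 1) ^ 2))) with
            ((sqrt L * sqrt L) / (sqrt L / sqrt (Q + INR (K - 1) ^ 2))) by (rewrite H; reflexivity).
          field. lra. }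
      assert (Hs := sqrt_add_le Q (INR (K - 1) ^ 2) HQ (pow2_ge_0 _)).
      rewrite sqrt_pow2 in Hs by lra.
      assert (0 <= 2 * INR (K - 1) * L) by nra. nra.
    - replace (L / (1 / (2 * INR (K - 1)))) with (2 * INR (K - 1) * L) by (field; lra).
      assert (0 <= sqrt L * sqrt Q) by nra. assert (0 <= sqrt L * INR (K - 1)) by nra. lra. }
  assert (HsLL : sqrt L <= 2 * L).
  { assert (HsL : 0 < sqrt L) by (apply sqrt_lt_R0; lra).
    assert (sqrt L * sqrt L = L) by (apply sqrt_sqrt; lra). nra. }
  assert (HJ' : Fadd (gP ell K) h + ln (Wf ell K h et) / et - L / et + et * Q <= 2 * sqrt L * sqrt Q) by exact HJ.
  assert (sqrt L * INR (K - 1) <= 2 * L * INR (K - 1)) by (apply Rmult_le_compat_r; lra).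
  lra.
Qed.



Fixpoint Pw (b : nat) (h : hist) : R :=
  match h with
  | [] => 1
  | (s, A, B) :: h' => (if Nat.eqb B b then 2 else 1) * Pw b h'
  end.

Lemma Pw_ge1 b h : 1 <= Pw b h.
Proof. induction h as [|[[s A] B] h IH]; simpl; [lra|]. destruct (Nat.eqb B b); lra. Qed.

Definition Ebnd (ell : nat -> nat -> R) (K : nat) (eps : R) :=
  forall t a a', (1 <= t)%nat -> (a < K)%nat -> (a' < K)%nat -> Rabs (ell t a - ell t a') <= eps.

Lemma ln2_ge : 3 / 5 <= ln 2.
Proof.
  assert (H1 := exp_ineq1_le (- (1/5))).
  assert (H2 : exp (1/5) <= 5/4).
  { replace (1/5) with (- - (1/5)) by ring. rewrite exp_Ropp.
    replace (5/4) with (/ (4/5)) by field. apply Rinv_le_contravar; lra. }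
  assert (H3 : exp (3/5) <= 2).
  { replace (3/5) with (1/5 + 1/5 + 1/5) by field. rewrite !exp_plus.
    assert (H0 := exp_pos (1/5)).
    assert (exp (1/5) * exp (1/5) <= 5/4 * (5/4)) by (apply Rmult_le_compat; lra).
    assert (exp (1/5) * exp (1/5) * exp (1/5) <= 5/4 * (5/4) * (5/4)) by (apply Rmult_le_compat; nra).
    lra. }
  rewrite <- (ln_exp (3/5)). apply ln_mono; [apply exp_pos|auto].
Qed.

Lemma S_le_Pw ell K eps h a : (2 <= K)%nat -> Ebnd ell K eps -> valid K h ->
  Ssum ell K h a <= INR (K - 1) ^ 2 * eps ^ 2 / ln 2 * ln (Pw a h).
Proof.
  intros HK He. assert (Hl2 : 3/5 <= ln 2) by apply ln2_ge.
  induction h as [|[[s A] B] h IH]; intros Hv.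
  - simpl. rewrite ln_1. lra.
  - inversion Hv as [|x l Hx Hv' E]; subst. destruct Hx as [Hs [HA HB]].
    specialize (IH Hv'). simpl Ssum. simpl Pw. unfold est.
    destruct (Nat.eqb_spec B a) as [->|].
    + rewrite ln_mult by (lra || (assert (Hp := Pw_ge1 a h); lra)).
      assert (Hb := He s a A Hs HB HA).
      assert (Hsq : (ell s a - ell s A) ^ 2 <= eps ^ 2).
      { unfold Rabs in Hb; destruct (Rcase_abs (ell s a - ell s A)); nra. }
      assert (E : INR (K - 1) ^ 2 * eps ^ 2 / ln 2 * (ln 2 + ln (Pw a h)) =
                  INR (K - 1) ^ 2 * eps ^ 2 + INR (K - 1) ^ 2 * eps ^ 2 / ln 2 * ln (Pw a h))
        by (field; lra).
      rewrite E.
      assert (INR (K - 1) ^ 2 * (ell s a - ell s A) ^ 2 <= INR (K - 1) ^ 2 * eps ^ 2)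
        by (apply Rmult_le_compat_l; [apply pow2_ge_0|auto]).
      replace ((INR (K - 1) * (ell s a - ell s A)) ^ 2) with (INR (K - 1) ^ 2 * (ell s a - ell s A) ^ 2) by ring.
      lra.
    + rewrite Rmult_1_l. replace (0 ^ 2) with 0 by ring. lra.
Qed.

Definition SigP K h := rsum (arms K) (fun b => Pw b h).

Lemma Q_le_Sig ell K eps h : (2 <= K)%nat -> Ebnd ell K eps -> valid K h ->
  Qm ell K h <= INR (K - 1) ^ 2 * eps ^ 2 / ln 2 * ln (SigP K h).
Proof.
  intros HK He Hv. assert (Hl2 : 3/5 <= ln 2) by apply ln2_ge.
  assert (Hk : 0 <= INR (K - 1) ^ 2 * eps ^ 2 / ln 2).
  { unfold Rdiv. apply Rmult_le_pos; [apply Rmult_le_pos; apply pow2_ge_0|left; apply Rinv_0_lt_compat; lra]. }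
  assert (Hge : forall b, (b < K)%nat -> Pw b h <= SigP K h).
  { intros b Hb. unfold SigP. apply (rsum_ge_term _ (fun b => Pw b h)); [intros; assert (Hp := Pw_ge1 x h); lra|apply in_arms; auto]. }
  unfold Qm. apply fmax_le.
  - apply Rmult_le_pos; auto. rewrite <- ln_1. apply ln_mono; [lra|].
    eapply Rle_trans; [apply (Pw_ge1 0 h)|apply Hge; lia].
  - intros a Ha. apply in_arms in Ha. eapply Rle_trans; [apply S_le_Pw; eauto|].
    apply Rmult_le_compat_l; auto. apply ln_mono; [assert (Hp := Pw_ge1 a h); lra|apply Hge; auto].
Qed.

Lemma node_ind ell K h b : (2 <= K)%nat -> (b < K)%nat ->
  node ell K h (fun A B => if Nat.eqb B b then 2 else 1) <= 1 + 1 / INR (K - 1).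
Proof.
  intros HK Hb. assert (Hk := INR_Km1_pos K HK).
  rewrite (node_ext _ _ _ _ (fun A B => 1 + (if Nat.eqb B b then 1 else 0))) by (intros; destruct (Nat.eqb B b); ring).
  rewrite node_plus, node_const by auto. apply Rplus_le_compat_l.
  unfold node.
  rewrite (rsum_ext _ _ (fun A => prob ell K h A * (1 / INR (K - 1)) * (1 - if Nat.eqb A b then 1 else 0))).
  2:{ intros A HA. apply in_arms in HA. rewrite node_inner by auto. f_equal.
      rewrite (rsum_indic (arms K) (fun _ => 1) b); [reflexivity|apply arms_nodup|apply in_arms; auto]. }
  eapply Rle_trans.
  { apply rsum_le. intros A HA. apply Rmult_le_compat_l.
    - apply Rmult_le_pos; [apply prob_nonneg; lia|left; apply Rdiv_lt_0_compat; lra].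
    - assert (1 - (if Nat.eqb A b then 1 else 0) <= 1) by (destruct (Nat.eqb A b); lra). exact H. }
  rewrite rsum_scal_r, rsum_scal_r, prob_sum by lia. lra.
Qed.

Lemma Ex_Pw ell K n t h b : (2 <= K)%nat -> (b < K)%nat ->
  Ex ell K n t h (Pw b) <= Pw b h * (1 + 1 / INR (K - 1)) ^ n.
Proof.
  intros HK Hb. assert (Hk := INR_Km1_pos K HK). revert t h; induction n; intros t h; simpl.
  - lra.
  - eapply Rle_trans.
    { apply node_mono; auto. intros A B _ _ _. apply IHn. }
    simpl Pw.
    rewrite (node_ext _ _ _ _ (fun A B => (Pw b h * (1 + 1 / INR (K - 1)) ^ n) * (if Nat.eqb B b then 2 else 1)))
      by (intros; ring).
    rewrite node_scal.
    assert (H := node_ind ell K h b HK Hb).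
    assert (0 <= Pw b h * (1 + 1 / INR (K - 1)) ^ n).
    { apply Rmult_le_pos; [assert (Hp := Pw_ge1 b h); lra|]. apply pow_le.
      assert (0 < 1 / INR (K-1)) by (apply Rdiv_lt_0_compat; lra). lra. }
    replace (Pw b h * ((1 + 1 / INR (K - 1)) * (1 + 1 / INR (K - 1)) ^ n)) with
      (Pw b h * (1 + 1 / INR (K - 1)) ^ n * (1 + 1 / INR (K - 1))) by ring.
    apply Rmult_le_compat_l; auto.
Qed.

Lemma Ex_Sig ell K T : (2 <= K)%nat ->
  Ex ell K T 1 [] (SigP K) <= INR K * (1 + 1 / INR (K - 1)) ^ T.
Proof.
  intros HK. unfold SigP. rewrite Ex_rsum by auto.
  eapply Rle_trans.
  { apply rsum_le. intros b Hb. apply in_arms in Hb. apply (Ex_Pw ell K T 1 [] b HK Hb). }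
  simpl Pw. rewrite (rsum_ext _ _ (fun _ => (1 + 1 / INR (K - 1)) ^ T)) by (intros; ring).
  rewrite rsum_arms_const. lra.
Qed.



Lemma fmin_cases (f : nat -> R) x0 l :
  fold_right Rmin x0 (map f l) = x0 \/ exists a, In a l /\ fold_right Rmin x0 (map f l) = f a.
Proof.
  induction l as [|x l IH]; simpl; [auto|].
  destruct (Rle_dec (f x) (fold_right Rmin x0 (map f l))) as [Hle|Hle].
  - right; exists x; split; auto. apply Rmin_left; auto.
  - rewrite Rmin_right by lra. destruct IH as [E|[a [Ha E]]]; [left; auto|right; exists a; auto].
Qed.

Lemma Fadd_triv ell K eps astar h : Ebnd ell K eps -> (astar < K)%nat -> valid K h ->
  Fadd (fun s _ A _ => ell s A - ell s astar) h <= Fadd (fun _ _ _ _ => eps) h.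
Proof.
  intros He Ha. induction h as [|[[s A] B] h IH]; intros Hv; simpl; [lra|].
  inversion Hv as [|x l Hx Hv' E]; subst. destruct Hx as [Hs [HA HB]].
  assert (H := He s A astar Hs HA Ha). unfold Rabs in H; destruct (Rcase_abs (ell s A - ell s astar)).
  all: specialize (IH Hv'); lra.
Qed.

Lemma div_nonneg a b : 0 <= a -> 0 < b -> 0 <= a / b.
Proof. intros. unfold Rdiv. apply Rmult_le_pos; auto. left; apply Rinv_0_lt_compat; auto. Qed.

Lemma sq_le a b : 0 <= a -> 0 <= b -> a * a <= b * b -> a <= b.
Proof. intros. nra. Qed.

Theorem theorem1 (K : nat) (ell : nat -> nat -> R) (eps : R) (T : nat) :
  (2 <= K)%nat ->
  (forall t a, (1 <= t)%nat -> (a < K)%nat -> 0 <= ell t a <= 1) ->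
  (forall t a a', (1 <= t)%nat -> (a < K)%nat -> (a' < K)%nat ->
     Rabs (ell t a - ell t a') <= eps) ->
  (1 <= T)%nat ->
  SODA_regret ell K T <=
    4 * eps * sqrt (INR (K - 1) * ln (INR K)) *
      sqrt (INR T + INR (K - 1) * sqrt (INR T) *
              (2 + sqrt (ln (sqrt (INR T) * INR (K - 1)) / 2)))
    + 4 * INR (K - 1) * ln (INR K).
Proof.
  intros HK Hl He HT.
  assert (Hl' : Lbnd ell K) by exact Hl.
  assert (He' : Ebnd ell K eps) by exact He.
  assert (Heps : 0 <= eps).
  { assert (H := He 1%nat 0%nat 0%nat (le_n 1) ltac:(lia) ltac:(lia)).
    rewrite Rminus_diag, Rabs_R0 in H. auto. }
  assert (Hk := INR_Km1_pos K HK).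
  set (L := ln (INR K)).
  assert (HL : / 2 < L) by apply lnK_ge_half, HK.
  set (X := INR (K - 1) * sqrt (INR T) * (2 + sqrt (ln (sqrt (INR T) * INR (K - 1)) / 2))).
  assert (HX : 0 <= X).
  { unfold X. apply Rmult_le_pos; [apply Rmult_le_pos; [lra|apply sqrt_pos]|].
    assert (H := sqrt_pos (ln (sqrt (INR T) * INR (K - 1)) / 2)). lra. }
  assert (HTp : 1 <= INR T) by (apply (le_INR 1 T) in HT; simpl in HT; lra).
  assert (Hmin : exists astar, (astar < K)%nat /\
     fold_right Rmin (cum_loss ell 0 T) (map (fun a => cum_loss ell a T) (arms K)) = cum_loss ell astar T).
  { destruct (fmin_cases (fun a => cum_loss ell a T) (cum_loss ell 0 T) (arms K)) as [E|[a [Ha E]]].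
    - exists 0%nat; split; [lia|auto].
    - exists a; split; auto. apply in_arms; auto. }
  destruct Hmin as [astar [Ha Emin]].
  unfold SODA_regret. rewrite Emin.
  set (m := sqrt (INR (K - 1) * L)).
  assert (Hm0 : 0 < m) by (apply sqrt_lt_R0; nra).
  assert (Hmm : m * m = INR (K - 1) * L) by (apply sqrt_sqrt; nra).
  set (sT := sqrt (INR T + X)).
  assert (HsT0 : 0 <= sT) by apply sqrt_pos.
  assert (HsT : sT * sT = INR T + X) by (apply sqrt_sqrt; lra).
  assert (HC : 0 <= 4 * INR (K - 1) * L) by nra.
  destruct (Rle_dec (INR T) (16 * INR (K - 1) * L)) as [Hsmall|Hbig].
  - rewrite regret_trivial by auto.
    eapply Rle_trans.
    { apply (Ex_mono _ _ _ _ _ _ (Fadd (fun _ _ _ _ => eps))); auto.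
      - intros; apply (Fadd_triv ell K eps astar); auto.
      - constructor. }
    rewrite Fadd_const_Ex by auto.
    set (s := sqrt (INR T)).
    assert (Hs0 : 0 <= s) by apply sqrt_pos.
    assert (Hss : s * s = INR T) by (apply sqrt_sqrt; lra).
    assert (Hs4 : s <= 4 * m) by (apply sq_le; nra).
    assert (HssT : s <= sT) by (apply sqrt_le_1_alt; lra).
    assert (INR T * eps <= 4 * eps * m * sT).
    { rewrite <- Hss. assert (s * s <= 4 * m * sT) by nra. nra. }
    lra.
  - rewrite regret_decomp by auto.
    assert (Hl2 : 3/5 <= ln 2) by apply ln2_ge.
    set (kap := INR (K - 1) ^ 2 * eps ^ 2 / ln 2).
    assert (Hkap : 0 <= kap).
    { unfold kap, Rdiv. apply Rmult_le_pos; [apply Rmult_le_pos; apply pow2_ge_0|left; apply Rinv_0_lt_compat; lra]. }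
    set (r := 1 + 1 / INR (K - 1)).
    assert (Hr : 1 < r) by (unfold r; assert (0 < 1 / INR (K-1)) by (apply Rdiv_lt_0_compat; lra); lra).
    assert (HKp : 0 < INR K) by (apply (lt_INR 0 K); lia).
    set (c := INR K * r ^ T).
    assert (Hc : 0 < c) by (unfold c; apply Rmult_lt_0_compat; auto; apply pow_lt; lra).
    assert (Hlnc : ln c <= L + INR T / INR (K - 1)).
    { unfold c. rewrite ln_mult by (auto; apply pow_lt; lra). rewrite ln_pow by lra.
      assert (H := ln_le_lin r ltac:(lra)).
      replace (INR T / INR (K - 1)) with (INR T * (r - 1)) by (unfold r; field; lra).
      assert (INR T * ln r <= INR T * (r - 1)) by (apply Rmult_le_compat_l; lra). unfold L. lra. }
    set (C := 4 * INR (K - 1) * L).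
    set (Reg := Ex ell K T 1 [] (fun hf => Fadd (gP ell K) hf - Dsum ell K hf astar)).
    assert (Hd : forall d, 0 < d -> Reg <= 3 / 2 * (L * kap * ln c / d + d) + C).
    { intros d Hd.
      set (al := 3 / 2 * (L * kap / (d * c))).
      set (be := 3 / 2 * (L * kap * (ln c - 1) / d + d) + C).
      assert (Hp : forall hf, valid K hf -> Fadd (gP ell K) hf - Dsum ell K hf astar <= al * SigP K hf + be).
      { intros hf Hv.
        assert (H1 := path_bound ell K hf astar HK Hl' Hv Ha). fold L C in H1.
        assert (H2 := Q_le_Sig ell K eps hf HK He' Hv). fold kap in H2.
        assert (HSig : 0 < SigP K hf).
        { unfold SigP. apply rsum_pos; [intros; assert (Hp := Pw_ge1 x hf); lra|].
          unfold arms; destruct K; [lia|simpl; congruence]. }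
        assert (H3 : ln (SigP K hf) <= SigP K hf / c + ln c - 1).
        { assert (H := ln_le_lin (SigP K hf / c) ltac:(apply Rdiv_lt_0_compat; auto)).
          unfold Rdiv at 1 in H. rewrite ln_mult, ln_Rinv in H by (auto; apply Rinv_0_lt_compat; auto). lra. }
        set (Q := Qm ell K hf) in *.
        assert (HQ : 0 <= Q) by apply Qm_nonneg.
        assert (H4 : 3 * sqrt L * sqrt Q <= 3 / 2 * (L * Q / d + d)).
        { rewrite Rmult_assoc, <- sqrt_mult_alt by lra. set (z := sqrt (L * Q)).
          assert (Hz : z * z = L * Q) by (apply sqrt_sqrt; nra).
          assert (0 <= (z - d) * (z - d)) by (pose proof (Rle_0_sqr (z - d)) as Hq; unfold Rsqr in Hq; exact Hq).
          replace (L * Q / d) with (z * z / d) by (rewrite Hz; reflexivity).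
          apply (Rmult_le_reg_r d); auto. field_simplify; [|lra]. nra. }
        assert (H5 : L * Q / d <= L * kap * (SigP K hf / c + ln c - 1) / d).
        { unfold Rdiv. apply Rmult_le_compat_r; [left; apply Rinv_0_lt_compat; auto|].
          rewrite Rmult_assoc. apply Rmult_le_compat_l; [lra|].
          eapply Rle_trans; [apply H2|]. apply Rmult_le_compat_l; auto. }
        unfold al, be.
        replace (3 / 2 * (L * kap / (d * c)) * SigP K hf + (3 / 2 * (L * kap * (ln c - 1) / d + d) + C))
          with (3 / 2 * (L * kap * (SigP K hf / c + ln c - 1) / d + d) + C) by (field; lra).
        lra. }
      eapply Rle_trans.
      { apply (Ex_mono _ _ _ _ _ _ (fun hf => al * SigP K hf + be)); auto. constructor. }
      rewrite (Ex_plus ell K T 1 [] (fun hf => al * SigP K hf) (fun _ => be)).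
      rewrite Ex_scal, Ex_const by auto.
      assert (HE := Ex_Sig ell K T HK). fold r c in HE.
      assert (Hal : 0 <= al).
      { unfold al. apply Rmult_le_pos; [lra|]. apply div_nonneg; [nra|apply Rmult_lt_0_compat; auto]. }
      assert (al * Ex ell K T 1 [] (SigP K) <= al * c) by (apply Rmult_le_compat_l; auto).
      assert (Eal : al * c = 3 / 2 * (L * kap / d)) by (unfold al; field; lra).
      unfold be in *. unfold Rdiv in *. nra. }
    set (M := L * kap * (L + INR T / INR (K - 1))).
    assert (HM : 0 <= M).
    { unfold M. apply Rmult_le_pos; [nra|]. assert (0 <= INR T / INR (K - 1)) by (apply div_nonneg; lra). lra. }
    assert (Hd2 : forall d, 0 < d -> Reg <= 3 / 2 * (M / d + d) + C).
    { intros d Hd0. eapply Rle_trans; [apply (Hd d Hd0)|].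
      assert (L * kap * ln c <= M) by (unfold M; apply Rmult_le_compat_l; [nra|auto]).
      assert (L * kap * ln c / d <= M / d) by (apply Rmult_le_compat_r; [left; apply Rinv_0_lt_compat|]; auto).
      lra. }
    assert (HReg : Reg <= 3 * sqrt M + C).
    { destruct (Req_dec M 0) as [HM0|HM0].
      - rewrite HM0, sqrt_0. destruct (Rle_dec Reg C); [lra|].
        assert (H := Hd2 ((Reg - C) / 3) ltac:(lra)). rewrite HM0 in H.
        replace (0 / ((Reg - C) / 3)) with 0 in H by (field; lra). lra.
      - assert (HsM : 0 < sqrt M) by (apply sqrt_lt_R0; lra).
        assert (H := Hd2 (sqrt M) HsM).
        assert (E : M / sqrt M = sqrt M).
        { assert (sqrt M * sqrt M = M) by (apply sqrt_sqrt; lra). rewrite <- H0 at 1. field. lra. }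
        rewrite E in H. lra. }
    assert (Hcore : 9 * (INR (K - 1) * L + INR T) <= 16 * ln 2 * (INR T + X)) by nra.
    assert (HMe : M = eps ^ 2 * (INR (K - 1) * L) * (INR (K - 1) * L + INR T) / ln 2).
    { unfold M, kap. field. lra. }
    assert (H3M : 3 * sqrt M <= 4 * eps * m * sT).
    { apply sq_le.
      - assert (0 <= sqrt M) by apply sqrt_pos. lra.
      - assert (0 <= eps * m) by nra. nra.
      - replace (3 * sqrt M * (3 * sqrt M)) with (9 * (sqrt M * sqrt M)) by ring.
        rewrite sqrt_sqrt by lra.
        replace (4 * eps * m * sT * (4 * eps * m * sT)) with (16 * eps ^ 2 * (m * m) * (sT * sT)) by ring.
        rewrite Hmm, HsT, HMe.
        set (p := eps ^ 2 * (INR (K - 1) * L)).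
        assert (Hp : 0 <= p) by (unfold p; apply Rmult_le_pos; [apply pow2_ge_0|nra]).
        replace (16 * eps ^ 2 * (INR (K - 1) * L) * (INR T + X)) with (p * (16 * (INR T + X))) by (unfold p; ring).
        replace (9 * (p * (INR (K - 1) * L + INR T) / ln 2)) with (p * (9 * (INR (K - 1) * L + INR T) / ln 2)) by (field; lra).
        apply Rmult_le_compat_l; auto.
        apply (Rmult_le_reg_r (ln 2)); [lra|]. field_simplify; lra. }
    lra.
Qed.
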